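(* Let $\gamma=\begin{pmatrix}a&b\\c&d\end{pmatrix}\in\mathrm{PSL}(2,\mathbb{Z})$, $n=\mathcal{R}(\gamma;z_q)$, let $x_\gamma,y_\gamma$ be as in the context, and define the integers \[ r=a+d,\quad u=b-|z_q|^2c-2\mu d,\quad s=a-d-2\mu c,\quad t=b+|z_q|^2c. \] Then $N(u+rz_q)=n+2\lambda^2$, $N(t+sz_q)=n-2\lambda^2$, and \[ y_\gamma+ix_\gamma=(u+rz_q)(t+s\overline{z_q}). \] Moreover, for every $n\in\mathcal{N}_{z_q}$, the set $L_n=\{(x_\gamma,y_\gamma):\gamma\in\Gamma_{z_q,n}\}$ satisfies \[ |L_n|=\frac{2c_n}{|\mathcal{O}_K^\times|}\,r_K(n+2\lambda^2)\,r_K(n-2\lambda^2), \] with $c_n=1/2$ if ($q$ even and $2\mid n$) or ($q$ odd and $q\mid 2n$), and $c_n=1/4$ otherwise.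
   Context: Let $q\in\{3,4,7,8,11,19,43,67,163\}$, $K$ the imaginary quadratic field of discriminant $-q$ (class number one), with ring of integers $\mathcal{O}_K$, unit group $\mathcal{O}_K^\times$, norm $N$; $r_K(M)$ is the number of elements of $\mathcal{O}_K$ of norm $M$ ($r_K(0)=1$). Let $z_q=\mu+i\lambda$ with $\mu=0$ if $q\in\{4,8\}$, $\mu=1/2$ otherwise, $\lambda=\sqrt q/2$. $\mathbb{H}$ is the upper half-plane with hyperbolic distance $\rho$, $\cosh\rho(z,w)=1+\frac{|z-w|^2}{2\,\mathrm{Im}(z)\mathrm{Im}(w)}$; $\Gamma=\mathrm{PSL}(2,\mathbb{Z})$. For $\gamma\in\Gamma$, $\mathcal{R}(\gamma;z_q)=2\lambda^2\cosh\rho(z_q,\gamma z_q)$, $\mathcal{N}_{z_q}=\{\mathcal{R}(\gamma;z_q):\gamma\in\Gamma\}$, $\Gamma_{z_q,n}=\{\gamma:\mathcal{R}(\gamma;z_q)=n\}$. For $\gamma=\begin{pmatrix}a&b\\c&d\end{pmatrix}$ with $n=\mathcal{R}(\gamma;z_q)$: $x_\gamma=2\lambda((\mu a+b)(\mu c+d)+\lambda^2ac-\mu((\mu c+d)^2+\lambda^2c^2))$ and $y_\gamma=n-2\lambda^2((\mu c+d)^2+\lambda^2c^2)$ (these do not depend on the sign of the matrix representing $\gamma$). *)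

(* Defs.v *)
From Stdlib Require Import Reals ZArith List ClassicalDescription.
From Coquelicot Require Import Coquelicot.
Import ListNotations.
Open Scope R_scope.

Definition qset (q : nat) : Prop := In q [3;4;7;8;11;19;43;67;163]%nat.

Definition mu (q : nat) : R :=
  if (Nat.eqb q 4 || Nat.eqb q 8)%bool then 0 else 1/2.
Definition lam (q : nat) : R := sqrt (INR q) / 2.
Definition zq (q : nat) : C := (mu q, lam q).

Definition cosh_rho (z w : C) : R :=
  1 + (Cmod (z - w)%C) ^ 2 / (2 * Im z * Im w).

Definition mobius (a b c d : Z) (z : C) : C :=
  ((RtoC (IZR a) * z + RtoC (IZR b)) / (RtoC (IZR c) * z + RtoC (IZR d)))%C.

(* (a b; c d) in SL(2,Z); PSL(2,Z) elements are represented by either lift *)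
Definition isSL2 (a b c d : Z) : Prop := (a * d - b * c = 1)%Z.

Definition Rgam (q : nat) (a b c d : Z) : R :=
  2 * lam q ^ 2 * cosh_rho (zq q) (mobius a b c d (zq q)).

Definition Nset (q : nat) (n : R) : Prop :=
  exists a b c d : Z, isSL2 a b c d /\ Rgam q a b c d = n.

Definition xg (q : nat) (a b c d : Z) : R :=
  let m := mu q in let l := lam q in
  2 * l * ((m * IZR a + IZR b) * (m * IZR c + IZR d) + l ^ 2 * IZR a * IZR c
           - m * ((m * IZR c + IZR d) ^ 2 + l ^ 2 * IZR c ^ 2)).

Definition yg (q : nat) (a b c d : Z) : R :=
  let m := mu q in let l := lam q in
  Rgam q a b c d - 2 * l ^ 2 * ((m * IZR c + IZR d) ^ 2 + l ^ 2 * IZR c ^ 2).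

Definition Lset (q : nat) (n : R) (p : R * R) : Prop :=
  exists a b c d : Z, isSL2 a b c d /\ Rgam q a b c d = n /\
                      p = (xg q a b c d, yg q a b c d).

(* ring of integers O_K = Z[z_q] (K of discriminant -q, class number one) *)
Definition OK (q : nat) (w : C) : Prop :=
  exists x y : Z, w = (RtoC (IZR x) + RtoC (IZR y) * zq q)%C.

Definition Nrm (w : C) : R := Re w ^ 2 + Im w ^ 2.

(* elements of O_K of norm M (their number is r_K(M)) *)
Definition normset (q : nat) (M : R) (w : C) : Prop := OK q w /\ Nrm w = M.

Definition units (q : nat) (w : C) : Prop :=
  OK q w /\ exists w' : C, OK q w' /\ (w * w')%C = RtoC 1.

Definition has_card {T : Type} (S : T -> Prop) (k : nat) : Prop :=
  exists l : list T, NoDup l /\ length l = k /\ forall x, In x l <-> S x.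

Definition cn_cond (q : nat) (n : R) : Prop :=
  (Nat.even q = true /\ exists k : Z, n = 2 * IZR k) \/
  (Nat.even q = false /\ exists k : Z, 2 * n = INR q * IZR k).

Definition cn (q : nat) (n : R) : R :=
  if excluded_middle_informative (cn_cond q n) then 1/2 else 1/4.

(* Main.v *)
Require Import Defs.
From Stdlib Require Import Reals ZArith List Lra Psatz Nsatz Znumtheory Permutation Bool Lia FinFun ClassicalDescription Arith.
From Coquelicot Require Import Coquelicot.
Open Scope R_scope.
Import ListNotations.

Module PL.
Local Open Scope nat_scope.

Lemma filter_length_perm {A} (f : A -> bool) l l' : Permutation l l' ->
  length (filter f l) = length (filter f l').
Proof.
  induction 1; simpl; auto.
  - destruct (f x); simpl; auto.
  - destruct (f x), (f y); simpl; auto.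
  - congruence.
Qed.

Lemma filter_map_len {A B} (f : B -> bool) (g : A -> B) l :
  length (filter f (map g l)) = length (filter (fun x => f (g x)) l).
Proof. induction l; simpl; auto. destruct (f (g a)); simpl; auto. Qed.

Lemma prod_count {A B} (P : A -> B -> bool) (l1 : list A) (l2 : list B) c K :
  (forall a, In a l1 -> c * length (filter (P a) l2) = K) ->
  c * length (filter (fun v => P (fst v) (snd v)) (list_prod l1 l2)) = K * length l1.
Proof.
  induction l1 as [|a l1 IH]; intros H; simpl; [lia|].
  rewrite filter_app, length_app, filter_map_len.
  change (length (filter (fun x => P (fst (a, x)) (snd (a, x))) l2)) with (length (filter (P a) l2)).
  rewrite Nat.mul_add_distr_l, IH by (intros; apply H; simpl; auto).
  rewrite (H a) by (simpl; auto). lia.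
Qed.

Section Fib.
Context {A B : Type} (decB : forall x y : B, {x = y} + {x <> y}) (f : A -> B).

Definition cnt (p : B) (l : list A) : nat :=
  length (filter (fun y => if decB (f y) p then true else false) l).

Fixpoint sumL (ps : list B) (l : list A) : nat :=
  match ps with [] => 0 | p :: ps' => cnt p l + sumL ps' l end.

Lemma sum_ind (x : B) ps : NoDup ps -> In x ps ->
  fold_right (fun p acc => (if decB x p then 1 else 0) + acc) 0 ps = 1.
Proof.
  induction 1 as [|p ps Hn Hd IH]; simpl; [tauto|].
  intros [->|Hin].
  - destruct (decB x x); [|congruence].
    assert (fold_right (fun p0 acc => (if decB x p0 then 1 else 0) + acc) 0 ps = 0).
    { clear IH Hd. induction ps; simpl; auto. destruct (decB x a).
      - subst. exfalso. apply Hn. simpl; auto.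
      - apply IHps. intro; apply Hn; simpl; auto. }
    lia.
  - destruct (decB x p); [subst; contradiction|]. rewrite IH; auto.
Qed.

Lemma sumL_cons x l ps : sumL ps (x :: l) =
  fold_right (fun p acc => (if decB (f x) p then 1 else 0) + acc) 0 ps + sumL ps l.
Proof.
  induction ps; simpl; auto. rewrite IHps. unfold cnt; simpl.
  destruct (decB (f x) a); simpl; lia.
Qed.

Lemma len_sumL ps l : NoDup ps -> (forall x, In x l -> In (f x) ps) -> length l = sumL ps l.
Proof.
  intros Hn. induction l as [|x l IH]; intros H.
  - simpl. clear. induction ps; simpl; auto.
  - rewrite sumL_cons, sum_ind; auto. simpl. rewrite IH; auto.
    intros; apply H; simpl; auto. apply H; simpl; auto.
Qed.

Lemma fiber_count (l : list A) U :
  (forall x, In x l -> cnt (f x) l = U) ->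
  length l = U * length (nodup decB (map f l)).
Proof.
  intros H. rewrite (len_sumL (nodup decB (map f l)) l).
  - assert (Hall : forall p, In p (nodup decB (map f l)) -> cnt p l = U).
    { intros p Hp. apply nodup_In, in_map_iff in Hp. destruct Hp as [x [<- Hx]]. auto. }
    revert Hall. generalize (nodup decB (map f l)). induction l0; simpl; intros; [lia|].
    rewrite Hall by auto. rewrite IHl0 by auto. lia.
  - apply NoDup_nodup.
  - intros x Hx. apply nodup_In, in_map; auto.
Qed.
End Fib.

Lemma has_len_eq {A} (l l' : list A) : NoDup l -> NoDup l' -> (forall x, In x l <-> In x l') ->
  length l = length l'.
Proof. intros; apply Permutation_length, NoDup_Permutation; auto. Qed.

End PL.
Import PL.

Module PZ.
Local Open Scope Z_scope.

Definition NZ (m k : Z) (p : Z * Z) : Z := (fst p * fst p + m * fst p * snd p + k * snd p * snd p)%Z.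
Definition mulZ (m k : Z) (a b : Z * Z) : Z * Z :=
  (fst a * fst b - k * snd a * snd b, fst a * snd b + fst b * snd a + m * snd a * snd b)%Z.
Definition conjZ (m : Z) (a : Z * Z) : Z * Z := (fst a + m * snd a, - snd a)%Z.

Definition alphaZ m k a b c d : Z * Z := (b - k * c - m * d, a + d).
Definition betaZ m k a b c d : Z * Z := (b + k * c, a - d - m * c).
Definition Valid m k (al be : Z * Z) : Prop :=
  exists a b c d, alphaZ m k a b c d = al /\ betaZ m k a b c d = be.
Definition CongB m k (al be : Z * Z) : bool :=
  let u := fst al in let r := snd al in let t := fst be in let s := snd be in
  Z.eqb ((2 * (t - u) - m * (r - s)) mod (4 * k - m * m)) 0 &&
  Z.eqb ((2 * k * (r - s) - m * (t - u)) mod (4 * k - m * m)) 0.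

Lemma det_id m k a b c d :
  NZ m k (alphaZ m k a b c d) - NZ m k (betaZ m k a b c d) = (4 * k - m * m) * (a * d - b * c).
Proof. unfold NZ, alphaZ, betaZ; cbn [fst snd]. ring_simplify. reflexivity. Qed.

Lemma modeq0 x q : 0 < q -> (Z.eqb (x mod q) 0 = true <-> (q | x)).
Proof. intros. rewrite Z.eqb_eq. split; intro H0; [apply Z.mod_divide|apply Z.mod_divide]; auto; lia. Qed.

Lemma Valid_iff m k al be : 0 < 4 * k - m * m ->
  (Valid m k al be <-> CongB m k al be = true).
Proof.
  intros Hq. destruct al as [u r], be as [t s]. unfold Valid, CongB, alphaZ, betaZ; cbn [fst snd].
  rewrite andb_true_iff, !modeq0 by auto. split.
  - intros [a [b [c [d [H1 H2]]]]]. injection H1 as <- <-. injection H2 as <- <-. split.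
    + exists c. ring.
    + exists d. ring.
  - intros [[c Hc] [d Hd]]. exists (r - d), (t - k * c), c, d.
    assert (E1 : (4 * k - m * m) * (t - u) = (4 * k - m * m) * (2 * k * c + m * d)).
    { transitivity (2 * k * (2 * (t - u) - m * (r - s)) + m * (2 * k * (r - s) - m * (t - u))); [ring|].
      rewrite Hc, Hd. ring. }
    assert (E2 : (4 * k - m * m) * (r - s) = (4 * k - m * m) * (2 * d + m * c)).
    { transitivity (m * (2 * (t - u) - m * (r - s)) + 2 * (2 * k * (r - s) - m * (t - u))); [ring|].
      rewrite Hc, Hd. ring. }
    apply Z.mul_reg_l in E1; [|lia]. apply Z.mul_reg_l in E2; [|lia].
    split; f_equal; lia.
Qed.

Lemma NZ4 m k p : 4 * NZ m k p = (2 * fst p + m * snd p) ^ 2 + (4 * k - m * m) * snd p ^ 2.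
Proof. unfold NZ. rewrite !Z.pow_2_r. ring. Qed.

Lemma NZ_nonneg m k p : 0 < 4 * k - m * m -> 0 <= NZ m k p.
Proof. intros. pose proof (NZ4 m k p). rewrite !Z.pow_2_r in H0.
  assert (0 <= (2 * fst p + m * snd p) * (2 * fst p + m * snd p)) by apply Z.square_nonneg.
  assert (0 <= (4 * k - m * m) * (snd p * snd p)) by (apply Z.mul_nonneg_nonneg; [lia|apply Z.square_nonneg]).
  lia. Qed.

Lemma NZ_zero m k p : 0 < 4 * k - m * m -> NZ m k p = 0 -> p = (0, 0).
Proof.
  intros Hq H. pose proof (NZ4 m k p). destruct p as [x y]; cbn [fst snd] in *.
  rewrite !Z.pow_2_r in H0. rewrite H in H0.
  assert (0 <= (2 * x + m * y) * (2 * x + m * y)) by apply Z.square_nonneg.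
  assert (0 <= y * y) by apply Z.square_nonneg.
  assert (0 <= (4 * k - m * m) * (y * y)) by (apply Z.mul_nonneg_nonneg; lia).
  assert (Hy : (4 * k - m * m) * (y * y) = 0) by lia.
  apply Z.mul_eq_0 in Hy. destruct Hy as [Hy|Hy]; [lia|].
  apply Z.mul_eq_0 in Hy. assert (y = 0) by tauto. subst y.
  assert (Hx : x * x = 0) by lia. apply Z.mul_eq_0 in Hx. f_equal; tauto.
Qed.

Lemma sq_bound a M : 0 <= M -> a * a <= 4 * M -> Z.abs a <= 2 * M + 1.
Proof.
  intros H1 H2. destruct (Z.le_gt_cases (Z.abs a) (2 * M + 1)); auto.
  exfalso. assert (Z.abs a * Z.abs a = a * a) by (destruct (Z.abs_spec a) as [[_ ->]|[_ ->]]; ring).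
  nia.
Qed.

Lemma NZ_bound m k p : (m = 0 \/ m = 1) -> 3 <= 4 * k - m * m ->
  Z.abs (fst p) <= 2 * Z.abs (NZ m k p) + 1 /\ Z.abs (snd p) <= 2 * Z.abs (NZ m k p) + 1.
Proof.
  intros Hm Hq. pose proof (NZ4 m k p). pose proof (NZ_nonneg m k p ltac:(lia)).
  destruct p as [x y]; cbn [fst snd] in *. rewrite !Z.pow_2_r in H. set (M := NZ m k (x, y)) in *.
  rewrite (Z.abs_eq M) by lia.
  assert (H1 : 0 <= (2 * x + m * y) * (2 * x + m * y)) by apply Z.square_nonneg.
  assert (H2 : 0 <= y * y) by apply Z.square_nonneg.
  assert (H3 : 3 * (y * y) <= (4 * k - m * m) * (y * y)) by (apply Z.mul_le_mono_nonneg_r; lia).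
  assert (Hy : y * y <= 4 * M) by lia.
  assert (Hx : (2 * x + m * y) * (2 * x + m * y) <= 4 * M) by lia.
  assert (Hy2 : Z.abs y <= 2 * M + 1) by (apply sq_bound; lia).
  assert (Hx2 : Z.abs (2 * x + m * y) <= 2 * M + 1) by (apply sq_bound; lia).
  clearbody M. split; [|auto]. destruct Hm; subst m; lia.
Qed.

Definition zrange (B : Z) : list Z := map (fun i => Z.of_nat i - B) (seq 0 (Z.to_nat (2 * B + 1))).

Lemma zrange_spec B x : 0 <= B -> (In x (zrange B) <-> Z.abs x <= B).
Proof.
  intros HB. unfold zrange. rewrite in_map_iff. split.
  - intros [i [<- Hi]]. apply in_seq in Hi. lia.
  - intros H. exists (Z.to_nat (x + B)). split; [lia|]. apply in_seq. lia.
Qed.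

Lemma zrange_nodup B : NoDup (zrange B).
Proof.
  unfold zrange. apply Injective_map_NoDup; [|apply seq_NoDup].
  intros i j H; lia.
Qed.

Lemma NoDup_list_prod {A B} (l1 : list A) (l2 : list B) :
  NoDup l1 -> NoDup l2 -> NoDup (list_prod l1 l2).
Proof.
  induction 1 as [|a l1 Ha Hl1 IH]; intros H2; simpl; [constructor|].
  apply NoDup_app.
  - apply Injective_map_NoDup; auto. intros x y E; injection E; auto.
  - auto.
  - intros [x y] Hin Hin2. apply in_map_iff in Hin. destruct Hin as [z [E _]]. injection E as <- <-.
    apply in_prod_iff in Hin2. tauto.
Qed.

Definition SL m k (M : Z) : list (Z * Z) :=
  filter (fun p => Z.eqb (NZ m k p) M)
    (list_prod (zrange (2 * Z.abs M + 1)) (zrange (2 * Z.abs M + 1))).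

Lemma SL_spec m k M : (m = 0 \/ m = 1) -> 3 <= 4 * k - m * m ->
  NoDup (SL m k M) /\ forall p, In p (SL m k M) <-> NZ m k p = M.
Proof.
  intros Hm Hq. split.
  - apply NoDup_filter, NoDup_list_prod; apply zrange_nodup.
  - intros [x y]. unfold SL. rewrite filter_In, in_prod_iff, Z.eqb_eq, !zrange_spec by lia.
    split; [tauto|]. intros H. pose proof (NZ_bound m k (x, y) Hm Hq). rewrite H in H0. cbn [fst snd] in H0. tauto.
Qed.


Definition sgm m k (p : Z * Z) : Z * Z :=
  if (Z.eqb m 0 && Z.eqb k 1)%bool then (- snd p, fst p) else (- fst p, - snd p).
Definition CondZ m k (M : Z) : bool :=
  if Z.eqb m 0 then Z.even M else Z.eqb (M mod (4 * k - 1)) 0.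

Lemma divide_mul_prime p a b : prime p -> (p | a * b) -> (p | a) \/ (p | b).
Proof. intros; apply prime_mult; auto. Qed.

Lemma prime_sq p a : prime p -> (p | a * a) -> (p | a).
Proof. intros Hp H. destruct (prime_mult p Hp a a H); auto. Qed.

Lemma prime_small p a : prime p -> 3 <= p -> (p | 2 * a) -> (p | a).
Proof.
  intros Hp H3 H. destruct (prime_mult p Hp 2 a H); auto.
  apply Z.divide_pos_le in H0; lia.
Qed.

Lemma odd_core k al be : prime (4 * k - 1) -> 3 <= 4 * k - 1 ->
  NZ 1 k al - NZ 1 k be = 4 * k - 1 * 1 ->
  (CondZ 1 k (NZ 1 k al) = true -> CongB 1 k al be = true) /\
  (CondZ 1 k (NZ 1 k al) = false -> CongB 1 k al (sgm 1 k be) = negb (CongB 1 k al be)).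
Proof.
  intros Hp H3 Heq. set (q := 4 * k - 1) in *.
  assert (Hq : 4 * k - 1 * 1 = q) by (unfold q; ring).
  destruct al as [u r], be as [t s].
  unfold CondZ, CongB, sgm, NZ in *. cbn [fst snd] in *.
  rewrite Hq in *. replace (Z.eqb 1 0) with false by reflexivity.
  replace (Z.eqb 1 0 && Z.eqb k 1)%bool with false by reflexivity. cbn [fst snd].
  set (A := 2 * u + r). set (B := 2 * t + s).
  assert (HA : A * A = 4 * (u * u + 1 * u * r + k * r * r) - q * (r * r)) by (unfold A, q; ring).
  assert (HB : B * B = 4 * (t * t + 1 * t * s + k * s * s) - q * (s * s)) by (unfold B, q; ring).
  set (M1 := u * u + 1 * u * r + k * r * r) in *. set (M2 := t * t + 1 * t * s + k * s * s) in *.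
  assert (HqP : 0 < q) by lia.
  assert (HE1 : forall t s, (q | 2 * (t - u) - 1 * (r - s)) -> (q | 2 * k * (r - s) - 1 * (t - u))).
  { intros t0 s0 Hd. apply prime_small; auto.
    replace (2 * (2 * k * (r - s0) - 1 * (t0 - u))) with (q * (r - s0) - (2 * (t0 - u) - 1 * (r - s0))) by (unfold q; ring).
    apply Z.divide_sub_r; auto. apply Z.divide_factor_l. }
  assert (Hc : forall t s, (Z.eqb ((2 * (t - u) - 1 * (r - s)) mod q) 0 &&
     Z.eqb ((2 * k * (r - s) - 1 * (t - u)) mod q) 0)%bool = Z.eqb ((2 * t + s - A) mod q) 0).
  { intros t0 s0. apply eq_iff_eq_true. rewrite andb_true_iff, !modeq0 by auto. split.
    - intros [H _]. replace (2 * t0 + s0 - A) with (2 * (t0 - u) - 1 * (r - s0)) by (unfold A; ring). auto.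
    - intros H. replace (2 * t0 + s0 - A) with (2 * (t0 - u) - 1 * (r - s0)) in H by (unfold A; ring).
      split; auto. }
  rewrite !Hc. cbn [andb fst snd]. fold B.
  replace (2 * - t + - s - A) with (- (B + A)) by (unfold B; ring).
  assert (Hdiff : (q | (B - A) * (B + A))).
  { exists (r * r - s * s - 4). transitivity (B * B - A * A); [ring|]. rewrite HA, HB.
    assert (M2 = M1 - q) by lia. rewrite H. ring. }
  assert (HM2 : M2 = M1 - q) by lia.
  split.
  - intros HM. apply modeq0 in HM; auto. apply modeq0; auto.
    assert (HAq : (q | A)). { apply prime_sq; auto. rewrite HA. apply Z.divide_sub_r.
      apply Z.divide_mul_r; auto. apply Z.divide_factor_l. }
    assert (HBq : (q | B)). { apply prime_sq; auto. rewrite HB. apply Z.divide_sub_r.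
      - apply Z.divide_mul_r. rewrite HM2. apply Z.divide_sub_r; [exact HM| apply Z.divide_refl].
      - apply Z.divide_factor_l. }
    apply Z.divide_sub_r; auto.
  - intros HM. rewrite <- not_true_iff_false, modeq0 in HM by auto. fold q in HM.
    apply Bool.eq_iff_eq_true. rewrite negb_true_iff, <- not_true_iff_false, !modeq0 by auto.
    split.
    + intros E2 E1. apply HM.
      assert (HAq : (q | A)).
      { apply prime_small; auto. apply Z.divide_opp_r.
        replace (- (2 * A)) with ((B - A) + - (B + A)) by ring. apply Z.divide_add_r; auto. }
      assert (H4 : (q | 2 * (2 * M1))).
      { replace (2 * (2 * M1)) with (A * A + q * (r * r)) by (rewrite HA; ring).
        apply Z.divide_add_r; [apply Z.divide_mul_r; auto | apply Z.divide_factor_l]. }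
      apply (prime_small q); auto. apply (prime_small q); auto.
    + intros E1. destruct (prime_mult q Hp _ _ Hdiff) as [Hd|Hd]; [tauto|]. apply Z.divide_opp_r; auto.
Qed.

Lemma prime_check p : 1 < p -> forallb (fun i => Z.eqb (Z.gcd (Z.of_nat i) p) 1) (seq 1 (Z.to_nat p - 1)) = true -> prime p.
Proof.
  intros H1 H2. apply prime_intro; auto. intros n Hn.
  apply Zgcd_1_rel_prime. rewrite forallb_forall in H2.
  specialize (H2 (Z.to_nat n)). rewrite Z2Nat.id in H2 by lia. apply Z.eqb_eq, H2.
  apply in_seq. lia.
Qed.


Lemma decomp N x : 0 < N -> exists a x0, x = x0 + N * a /\ 0 <= x0 < N.
Proof.
  intros HN. exists (x / N), (x mod N). split.
  - rewrite (Z.div_mod x N) at 1 by lia. ring.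
  - apply Z.mod_pos_bound; lia.
Qed.

Lemma CongB_shift k N u r t s a b c d : (4 * k | 2 * N) ->
  CongB 0 k (u + N * a, r + N * b) (t + N * c, s + N * d) = CongB 0 k (u, r) (t, s).
Proof.
  intros [w Hw]. unfold CongB. cbn [fst snd]. replace (4 * k - 0 * 0) with (4 * k) by ring.
  f_equal; f_equal.
  - replace (2 * (t + N * c - (u + N * a)) - 0 * (r + N * b - (s + N * d)))
      with ((2 * (t - u) - 0 * (r - s)) + ((c - a) * w) * (4 * k)) by (rewrite <- Z.mul_assoc, <- Hw; ring).
    destruct (Z.eq_dec (4 * k) 0) as [E|E]; [rewrite E; rewrite !Zmod_0_r; lia|].
    apply Z.mod_add; auto.
  - replace (2 * k * (r + N * b - (s + N * d)) - 0 * (t + N * c - (u + N * a)))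
      with ((2 * k * (r - s) - 0 * (t - u)) + ((b - d) * k * w) * (4 * k)) by
      (replace ((b - d) * k * w * (4 * k)) with ((b - d) * k * (w * (4 * k))) by ring; rewrite <- Hw; ring).
    destruct (Z.eq_dec (4 * k) 0) as [E|E]; [rewrite E; rewrite !Zmod_0_r; lia|].
    apply Z.mod_add; auto.
Qed.

Lemma even_shift x y : Z.even (x + 2 * y) = Z.even x.
Proof. rewrite Z.even_add, Z.even_mul. simpl. destruct (Z.even x); auto. Qed.

Lemma mod_from_eq x W N : x = W * N -> x mod N = 0.
Proof. intros ->. apply Z_mod_mult. Qed.

Lemma in_rng n x : 0 <= x < Z.of_nat n -> In x (map Z.of_nat (seq 0 n)).
Proof. intros H. apply in_map_iff. exists (Z.to_nat x). split; [lia|]. apply in_seq; lia. Qed.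

Definition allZ (n : nat) (f : Z -> bool) : bool := forallb f (map Z.of_nat (seq 0 n)).

Lemma allZ_spec n f x : allZ n f = true -> 0 <= x < Z.of_nat n -> f x = true.
Proof. unfold allZ. rewrite forallb_forall. intros H Hx. apply H, in_rng; auto. Qed.

Definition claim (m k : Z) (al be : Z * Z) : bool :=
  if CondZ m k (NZ m k al) then CongB m k al be
  else Bool.eqb (CongB m k al (sgm m k be)) (negb (CongB m k al be)).

Lemma claim_ok m k al be : claim m k al be = true ->
  (CondZ m k (NZ m k al) = true -> CongB m k al be = true) /\
  (CondZ m k (NZ m k al) = false -> CongB m k al (sgm m k be) = negb (CongB m k al be)).
Proof.
  unfold claim. destruct (CondZ m k (NZ m k al)); intros H; split; intros; try discriminate; auto.
  apply Bool.eqb_prop; auto.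
Qed.

Definition chk4 (u r t s : Z) : bool :=
  negb (Z.eqb ((NZ 0 1 (u, r) - NZ 0 1 (t, s) - 4) mod 8) 0) || claim 0 1 (u, r) (t, s).

Lemma chk4_all : allZ 4 (fun u => allZ 4 (fun r => allZ 4 (fun t => allZ 4 (fun s => chk4 u r t s)))) = true.
Proof. vm_compute. reflexivity. Qed.

Lemma core4 al be : NZ 0 1 al - NZ 0 1 be = 4 * 1 - 0 * 0 ->
  (CondZ 0 1 (NZ 0 1 al) = true -> CongB 0 1 al be = true) /\
  (CondZ 0 1 (NZ 0 1 al) = false -> CongB 0 1 al (sgm 0 1 be) = negb (CongB 0 1 al be)).
Proof.
  intros H. apply claim_ok. destruct al as [u r], be as [t s].
  destruct (decomp 4 u) as [a [u0 [-> Hu]]]; [lia|].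
  destruct (decomp 4 r) as [b [r0 [-> Hr]]]; [lia|].
  destruct (decomp 4 t) as [c [t0 [-> Ht]]]; [lia|].
  destruct (decomp 4 s) as [d [s0 [-> Hs]]]; [lia|].
  assert (E : (NZ 0 1 (u0, r0) - NZ 0 1 (t0, s0) - 4) mod 8 = 0).
  { apply mod_from_eq with (W := - ((a * u0 + 2 * a * a) + (b * r0 + 2 * b * b) - (c * t0 + 2 * c * c) - (d * s0 + 2 * d * d))).
    unfold NZ in *; cbn [fst snd] in *. lia. }
  assert (Hc := chk4_all).
  assert (Hk := allZ_spec _ _ u0 Hc ltac:(lia)). cbv beta in Hk.
  assert (Hk2 := allZ_spec _ _ r0 Hk ltac:(lia)). cbv beta in Hk2.
  assert (Hk3 := allZ_spec _ _ t0 Hk2 ltac:(lia)). cbv beta in Hk3.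
  assert (Hk4 := allZ_spec _ _ s0 Hk3 ltac:(lia)). cbv beta in Hk4.
  unfold chk4 in Hk4. rewrite E in Hk4. simpl in Hk4.
  unfold claim in *.
  assert (EC : CondZ 0 1 (NZ 0 1 (u0 + 4 * a, r0 + 4 * b)) = CondZ 0 1 (NZ 0 1 (u0, r0))).
  { unfold CondZ, NZ. cbn [fst snd]. simpl Z.eqb. cbv iota.
    replace ((u0 + 4 * a) * (u0 + 4 * a) + 0 * (u0 + 4 * a) * (r0 + 4 * b) + 1 * (r0 + 4 * b) * (r0 + 4 * b))
      with ((u0 * u0 + 0 * u0 * r0 + 1 * r0 * r0) + 2 * (4 * a * u0 + 8 * a * a + 4 * b * r0 + 8 * b * b)) by ring.
    apply even_shift. }
  rewrite EC.
  rewrite !(CongB_shift 1 4) by (exists 2; ring).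
  unfold sgm. cbn [andb Z.eqb Pos.eqb fst snd].
  replace (- (s0 + 4 * d)) with (- s0 + 4 * (- d)) by ring.
  rewrite !(CongB_shift 1 4) by (exists 2; ring). exact Hk4.
Qed.

Definition chk8 (u r t s : Z) : bool :=
  negb (Z.eqb ((NZ 0 2 (u, r) - NZ 0 2 (t, s) - 8) mod 16) 0) || claim 0 2 (u, r) (t, s).

Lemma chk8_all : allZ 8 (fun u => allZ 4 (fun r => allZ 8 (fun t => allZ 4 (fun s => chk8 u r t s)))) = true.
Proof. vm_compute. reflexivity. Qed.

Lemma core8 al be : NZ 0 2 al - NZ 0 2 be = 4 * 2 - 0 * 0 ->
  (CondZ 0 2 (NZ 0 2 al) = true -> CongB 0 2 al be = true) /\
  (CondZ 0 2 (NZ 0 2 al) = false -> CongB 0 2 al (sgm 0 2 be) = negb (CongB 0 2 al be)).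
Proof.
  intros H. apply claim_ok. destruct al as [u r], be as [t s].
  destruct (decomp 8 u) as [a [u0 [-> Hu]]]; [lia|].
  destruct (decomp 4 r) as [b [r0 [-> Hr]]]; [lia|].
  destruct (decomp 8 t) as [c [t0 [-> Ht]]]; [lia|].
  destruct (decomp 4 s) as [d [s0 [-> Hs]]]; [lia|].
  assert (E : (NZ 0 2 (u0, r0) - NZ 0 2 (t0, s0) - 8) mod 16 = 0).
  { apply mod_from_eq with (W := - ((a * u0 + 4 * a * a) + (b * r0 + 2 * b * b) - (c * t0 + 4 * c * c) - (d * s0 + 2 * d * d))).
    unfold NZ in *; cbn [fst snd] in *. lia. }
  assert (Hc := chk8_all).
  assert (Hk := allZ_spec _ _ u0 Hc ltac:(lia)). cbv beta in Hk.
  assert (Hk2 := allZ_spec _ _ r0 Hk ltac:(lia)). cbv beta in Hk2.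
  assert (Hk3 := allZ_spec _ _ t0 Hk2 ltac:(lia)). cbv beta in Hk3.
  assert (Hk4 := allZ_spec _ _ s0 Hk3 ltac:(lia)). cbv beta in Hk4.
  unfold chk8 in Hk4. rewrite E in Hk4. simpl in Hk4.
  unfold claim in *.
  assert (EC : CondZ 0 2 (NZ 0 2 (u0 + 8 * a, r0 + 4 * b)) = CondZ 0 2 (NZ 0 2 (u0, r0))).
  { unfold CondZ, NZ. cbn [fst snd]. simpl Z.eqb. cbv iota.
    replace ((u0 + 8 * a) * (u0 + 8 * a) + 0 * (u0 + 8 * a) * (r0 + 4 * b) + 2 * (r0 + 4 * b) * (r0 + 4 * b))
      with ((u0 * u0 + 0 * u0 * r0 + 2 * r0 * r0) + 2 * (8 * a * u0 + 32 * a * a + 8 * b * r0 + 16 * b * b)) by ring.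
    apply even_shift. }
  rewrite EC.
  replace (u0 + 8 * a) with (u0 + 4 * (2 * a)) by ring.
  replace (t0 + 8 * c) with (t0 + 4 * (2 * c)) by ring.
  unfold sgm. cbn [andb Z.eqb Pos.eqb fst snd].
  replace (- (t0 + 4 * (2 * c))) with (- t0 + 4 * (- (2 * c))) by ring.
  replace (- (s0 + 4 * d)) with (- s0 + 4 * (- d)) by ring.
  rewrite !(CongB_shift 2 4) by (exists 1; ring). exact Hk4.
Qed.

End PZ.
Import PZ.


Definition mZ (q : nat) : Z := if (Nat.eqb q 4 || Nat.eqb q 8)%bool then 0%Z else 1%Z.
Definition kZ (q : nat) : Z := ((Z.of_nat q + mZ q * mZ q) / 4)%Z.

Definition PAR (q : nat) (m k : Z) : Prop :=
  2 * mu q = IZR m /\ 4 * (lam q * lam q) = IZR (4 * k - m * m) /\ 0 < lam q /\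
  (m = 0 \/ m = 1)%Z /\ (3 <= 4 * k - m * m)%Z /\ Z.of_nat q = (4 * k - m * m)%Z.

Lemma par_ok q : qset q -> PAR q (mZ q) (kZ q).
Proof.
  intros Hq.
  assert (Hm : 2 * mu q = IZR (mZ q) /\ Z.of_nat q = (4 * kZ q - mZ q * mZ q)%Z /\ (mZ q = 0 \/ mZ q = 1)%Z).
  { unfold qset in Hq; simpl in Hq.
    repeat (destruct Hq as [Hq|Hq]; [subst q; unfold mu, mZ, kZ; simpl; split; [lra|split; [reflexivity| auto]] |]).
    destruct Hq. }
  destruct Hm as [Hm1 [Hm2 Hm3]].
  assert (Hq3 : (3 <= Z.of_nat q)%Z).
  { unfold qset in Hq; simpl in Hq.
    repeat (destruct Hq as [Hq|Hq]; [subst q; simpl; lia |]). destruct Hq. }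
  assert (HqR : INR q = IZR (Z.of_nat q)) by apply INR_IZR_INZ.
  assert (Hpos : 0 < INR q). { rewrite HqR. apply IZR_lt. lia. }
  unfold PAR. split; [auto|]. split; [| split; [| split; [auto| split; lia]]].
  - rewrite <- Hm2, <- HqR. unfold lam.
    replace (4 * (sqrt (INR q) / 2 * (sqrt (INR q) / 2))) with (sqrt (INR q) * sqrt (INR q)) by field.
    apply sqrt_sqrt. lra.
  - unfold lam. apply Rdiv_lt_0_compat; [apply sqrt_lt_R0; auto| lra].
Qed.

Definition emb (q : nat) (p : Z * Z) : C := (IZR (fst p) + mu q * IZR (snd p), lam q * IZR (snd p)).

Ltac zR := repeat rewrite ?plus_IZR, ?minus_IZR, ?mult_IZR, ?opp_IZR in *.

Section E.
Variables (q : nat) (m k : Z) (HP : PAR q m k).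

Lemma emb_mul a b : emb q (mulZ m k a b) = (emb q a * emb q b)%C.
Proof.
  destruct HP as [H1 [H2 _]]. destruct a as [x1 y1], b as [x2 y2].
  unfold emb, mulZ, Cmult; cbn [fst snd]. zR.
  apply injective_projections; cbn [fst snd]; nsatz.
Qed.

Lemma emb_conj a : emb q (conjZ m a) = Cconj (emb q a).
Proof.
  destruct HP as [H1 [H2 _]]. destruct a as [x1 y1].
  unfold emb, conjZ, Cconj; cbn [fst snd]. zR.
  apply injective_projections; cbn [fst snd]; nsatz.
Qed.

Lemma Nrm_emb p : Nrm (emb q p) = IZR (NZ m k p).
Proof.
  destruct HP as [H1 [H2 _]]. destruct p as [x1 y1].
  unfold emb, NZ, Nrm, Re, Im; cbn [fst snd]. zR. simpl. nsatz.
Qed.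

Lemma emb_inj a b : emb q a = emb q b -> a = b.
Proof.
  destruct HP as [H1 [H2 [H3 _]]]. destruct a as [x1 y1], b as [x2 y2].
  unfold emb; cbn [fst snd]. intro H. injection H as Ha Hb.
  assert (IZR y1 = IZR y2). { apply Rmult_eq_reg_l with (lam q); lra. }
  apply eq_IZR in H. subst y2. f_equal. apply eq_IZR. lra.
Qed.

Lemma OK_iff w : OK q w <-> exists p, w = emb q p.
Proof.
  unfold OK, emb, zq, RtoC, Cplus, Cmult; split.
  - intros [x [y ->]]. exists (x, y). cbn [fst snd]. apply injective_projections; cbn [fst snd]; ring.
  - intros [[x y] ->]. exists x, y. cbn [fst snd]. apply injective_projections; cbn [fst snd]; ring.
Qed.

End E.


Lemma sumsq0 x y : x ^ 2 + y ^ 2 = 0 -> x = 0 /\ y = 0.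
Proof. intros H. pose proof (pow2_ge_0 x). pose proof (pow2_ge_0 y).
  split; (destruct (Req_dec x 0); destruct (Req_dec y 0); auto;
  exfalso; first [ pose proof (pow_nonzero x 2 ltac:(assumption)) | pose proof (pow_nonzero y 2 ltac:(assumption))]; lra). Qed.

Lemma Rgam_formula q a b c d : isSL2 a b c d -> 0 < lam q ->
  Rgam q a b c d = 2 * lam q ^ 2 +
   ((IZR b + (mu q ^2 + lam q ^2) * IZR c) + (IZR a - IZR d - 2 * mu q * IZR c) * mu q) ^ 2
   + ((IZR a - IZR d - 2 * mu q * IZR c) * lam q) ^ 2.
Proof.
  intros H Hl. unfold isSL2 in H. apply (f_equal IZR) in H.
  rewrite minus_IZR, !mult_IZR in H.
  unfold Rgam, cosh_rho, mobius, zq, Cmod, Cminus, Cdiv, Cinv, Cmult, Cplus, Copp, RtoC, Im.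
  cbn [fst snd].
  generalize (mu q) as m; intro m. 
  set (l := lam q) in *. set (A := IZR a) in *. set (B := IZR b) in *. set (Cc := IZR c) in *. set (D := IZR d) in *.
  assert (HD : (Cc * m + D) ^ 2 + (Cc * l) ^ 2 <> 0).
  { intro Z0. destruct (sumsq0 _ _ Z0) as [Hd Hc].
    assert (Cc = 0). { destruct (Rmult_integral _ _ Hc); [auto| lra]. }
    rewrite H0 in Hd, H. assert (HD0 : D = 0) by lra. rewrite HD0 in H. lra. }
  rewrite pow2_sqrt.
  2: { apply Rplus_le_le_0_compat; apply pow2_ge_0. }
  assert (E: 2 * l ^ 2 + ((B + (m ^ 2 + l ^ 2) * Cc) + (A - D - 2 * m * Cc) * m) ^ 2
   + ((A - D - 2 * m * Cc) * l) ^ 2 = 2 * l ^ 2 + (((B + (m ^ 2 + l ^ 2) * Cc) + (A - D - 2 * m * Cc) * m) ^ 2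
   + ((A - D - 2 * m * Cc) * l) ^ 2) / (A * D - B * Cc)).
  { rewrite H. field. }
  rewrite E. field. split; [lra|]. split; [auto|]. split; [|lra].
  replace ((A * m + B) * - (Cc * l) + A * l * (Cc * m + D)) with (l * (A * D - B * Cc)) by ring.
  rewrite H. lra.
Qed.
Lemma part1_gen (m l A B Cc D : R) : A * D - B * Cc = 1 ->
  let K := m^2 + l^2 in
  let r := A + D in let u := B - K * Cc - 2 * m * D in
  let s := A - D - 2 * m * Cc in let t := B + K * Cc in
  let n := 2 * l ^ 2 + (t + s * m) ^ 2 + (s * l) ^ 2 in
  (u + r * m) ^ 2 + (r * l) ^ 2 = n + 2 * l ^ 2 /\
  (n - 2 * l ^ 2 * ((m * Cc + D) ^ 2 + l ^ 2 * Cc ^ 2) =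
     (u + r * m) * (t + s * m) - (r * l) * (- (s * l))) /\
  (2 * l * ((m * A + B) * (m * Cc + D) + l ^ 2 * A * Cc
           - m * ((m * Cc + D) ^ 2 + l ^ 2 * Cc ^ 2)) =
     (u + r * m) * (- (s * l)) + (r * l) * (t + s * m)).
Proof.
  intros H K r u s t n. unfold n, r, u, s, t, K.
  split; [|split].
  - match goal with |- ?L = ?R => assert (E : L - R = 4 * l ^ 2 * (A * D - B * Cc - 1)) by ring end.
    rewrite H in E. lra.
  - match goal with |- ?L = ?R => assert (E : L - R = - 2 * l ^ 2 * (A * D - B * Cc - 1)) by ring end.
    rewrite H in E. lra.
  - ring.
Qed.

Lemma Cmodz2 q : Cmod (zq q) ^ 2 = mu q ^ 2 + lam q ^ 2.
Proof. unfold Cmod, zq. cbn [fst snd]. rewrite pow2_sqrt; [ring|]. nra. Qed.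

Lemma part1 q (Hq : qset q) :
  (forall a b c d : Z, isSL2 a b c d ->
     let n := Rgam q a b c d in
     let z := zq q in
     let r := IZR (a + d) in
     let u := IZR b - Cmod z ^ 2 * IZR c - 2 * mu q * IZR d in
     let s := IZR a - IZR d - 2 * mu q * IZR c in
     let t := IZR b + Cmod z ^ 2 * IZR c in
     (exists ui si ti : Z, u = IZR ui /\ s = IZR si /\ t = IZR ti) /\
     Nrm (RtoC u + RtoC r * z)%C = n + 2 * lam q ^ 2 /\
     Nrm (RtoC t + RtoC s * z)%C = n - 2 * lam q ^ 2 /\
     ((yg q a b c d, xg q a b c d) : C)
       = ((RtoC u + RtoC r * z) * (RtoC t + RtoC s * Cconj z))%C).
Proof.
  intros a b c d H n z r u s t.
  pose proof (par_ok q Hq) as HP. destruct HP as [H1 [H2 [H3 _]]].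
  assert (HK : mu q ^ 2 + lam q ^ 2 = IZR (kZ q)).
  { replace (mu q) with (IZR (mZ q) / 2) by lra. replace (lam q ^ 2) with (lam q * lam q) by ring. zR. lra. }
  assert (HD : IZR a * IZR d - IZR b * IZR c = 1).
  { unfold isSL2 in H. rewrite <- mult_IZR, <- mult_IZR, <- minus_IZR, H. reflexivity. }
  pose proof (part1_gen (mu q) (lam q) (IZR a) (IZR b) (IZR c) (IZR d) HD) as P.
  cbv zeta in P. destruct P as [P1 [P2 P3]].
  pose proof (Rgam_formula q a b c d H H3) as RG. fold n in RG.
  unfold u, t, z in *. rewrite Cmodz2 in *. unfold r. rewrite plus_IZR.
  split; [|split; [|split]].
  - exists (b - kZ q * c - mZ q * d)%Z, (a - d - mZ q * c)%Z, (b + kZ q * c)%Z.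
    rewrite HK. zR. rewrite <- H1. repeat split; ring.
  - unfold Nrm, RtoC, Cplus, Cmult, zq, Re, Im. cbn [fst snd]. rewrite RG.
    rewrite <- P1. ring.
  - unfold Nrm, RtoC, Cplus, Cmult, zq, Re, Im, s. cbn [fst snd]. rewrite RG. ring.
  - unfold yg, xg, s, RtoC, Cplus, Cmult, Cconj, zq. cbn [fst snd]. fold n. rewrite RG.
    apply injective_projections; cbn [fst snd].
    + rewrite P2. ring.
    + rewrite P3. ring.
Qed.


Module PF.
Local Open Scope C_scope.

Lemma Cmult_neq0 (x y : C) : x <> 0 -> y <> 0 -> x * y <> 0.
Proof. intros Hx Hy H. apply Hy. replace y with (/ x * (x * y)) by (field; auto). rewrite H. ring. Qed.

Lemma Cconj_neq0 (x : C) : x <> 0 -> Cconj x <> 0.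
Proof. intros Hx H. apply Hx. rewrite <- (Cconj_conj x), H. unfold Cconj; simpl.
  apply injective_projections; simpl; lra. Qed.

Lemma Cmult_eq_reg_l (c x y : C) : c <> 0 -> c * x = c * y -> x = y.
Proof. intros Hc H. replace x with (/ c * (c * x)) by (field; auto). rewrite H. field; auto. Qed.

Lemma fib_C (a b a' b' P Q P' Q' z zc Aa Cc : C) :
  a <> 0 -> z - zc <> 0 ->
  a * Cconj b = a' * Cconj b' -> a * Cconj a = a' * Cconj a' ->
  a = P - zc * Q -> b = P - z * Q -> a' = P' - zc * Q' -> b' = P' - z * Q' ->
  Aa * Q - Cc * P = 1 ->
  a' / a = Aa * Q' - Cc * P' /\ a' = a' / a * a /\ b' = a' / a * b.
Proof.
  intros Ha Hz Hab Haa H1 H2 H3 H4 Hd.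
  assert (Hca : Cconj a <> 0) by (apply Cconj_neq0; auto).
  assert (Ha' : a' <> 0).
  { intro E. apply (Cmult_neq0 a (Cconj a)); auto. rewrite Haa, E. ring. }
  assert (Hca' : Cconj a' <> 0) by (apply Cconj_neq0; auto).
  assert (Hab2 : Cconj a * b = Cconj a' * b').
  { rewrite <- (Cconj_conj b), <- (Cconj_conj b'), <- !Cmult_conj, Hab. reflexivity. }
  assert (Hb' : b' = a' / a * b).
  { apply (Cmult_eq_reg_l (Cconj a')); auto.
    transitivity (Cconj a * b); [rewrite Hab2; reflexivity|].
    apply (Cmult_eq_reg_l a); auto.
    transitivity (a * Cconj a * b); [ring|]. rewrite Haa. field. auto. }
  assert (Hq : Q' = a' / a * Q).
  { apply (Cmult_eq_reg_l (z - zc)); auto.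
    transitivity (a' - b'); [rewrite H3, H4; ring|].
    rewrite Hb'. transitivity (a' / a * (a - b)); [field; auto|].
    rewrite H1, H2. ring. }
  assert (Hp : P' = a' / a * P).
  { transitivity (b' + z * Q'); [rewrite H4; ring|]. rewrite Hb', Hq, H2. ring. }
  split; [|split].
  - rewrite Hq, Hp. transitivity (a' / a * (Aa * Q - Cc * P)); [rewrite Hd; ring| ring].
  - field; auto.
  - auto.
Qed.

End PF.
Import PF.


Lemma core q : qset q -> forall al be,
  (NZ (mZ q) (kZ q) al - NZ (mZ q) (kZ q) be = 4 * kZ q - mZ q * mZ q)%Z ->
  (CondZ (mZ q) (kZ q) (NZ (mZ q) (kZ q) al) = true -> CongB (mZ q) (kZ q) al be = true) /\
  (CondZ (mZ q) (kZ q) (NZ (mZ q) (kZ q) al) = false ->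
     CongB (mZ q) (kZ q) al (sgm (mZ q) (kZ q) be) = negb (CongB (mZ q) (kZ q) al be)).
Proof.
  intros Hq al be. unfold qset in Hq; simpl in Hq.
  destruct Hq as [<-|[<-|[<-|[<-|[<-|[<-|[<-|[<-|[<-|[]]]]]]]]]].
  - change (mZ 3) with 1%Z. change (kZ 3) with 1%Z.
    apply odd_core; [apply prime_check; [lia| vm_compute; reflexivity] | lia].
  - change (mZ 4) with 0%Z. change (kZ 4) with 1%Z. apply core4.
  - change (mZ 7) with 1%Z. change (kZ 7) with 2%Z.
    apply odd_core; [apply prime_check; [lia| vm_compute; reflexivity] | lia].
  - change (mZ 8) with 0%Z. change (kZ 8) with 2%Z. apply core8.
  - change (mZ 11) with 1%Z. change (kZ 11) with 3%Z.
    apply odd_core; [apply prime_check; [lia| vm_compute; reflexivity] | lia].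
  - change (mZ 19) with 1%Z. change (kZ 19) with 5%Z.
    apply odd_core; [apply prime_check; [lia| vm_compute; reflexivity] | lia].
  - change (mZ 43) with 1%Z. change (kZ 43) with 11%Z.
    apply odd_core; [apply prime_check; [lia| vm_compute; reflexivity] | lia].
  - change (mZ 67) with 1%Z. change (kZ 67) with 17%Z.
    apply odd_core; [apply prime_check; [lia| vm_compute; reflexivity] | lia].
  - change (mZ 163) with 1%Z. change (kZ 163) with 41%Z.
    apply odd_core; [apply prime_check; [lia| vm_compute; reflexivity] | lia].
Qed.

Lemma HK_of q m k : PAR q m k -> mu q ^ 2 + lam q ^ 2 = IZR k.
Proof.
  intros [H1 [H2 _]]. replace (mu q) with (IZR m / 2) by lra.
  replace (lam q ^ 2) with (lam q * lam q) by ring. zR. lra.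
Qed.

Lemma Rgam_NZ q m k (HP : PAR q m k) a b c d : isSL2 a b c d ->
  Rgam q a b c d = IZR (NZ m k (betaZ m k a b c d)) + 2 * lam q ^ 2.
Proof.
  intros H. pose proof (HK_of q m k HP) as HK. destruct HP as [H1 [H2 [H3 _]]].
  rewrite (Rgam_formula q a b c d H H3). unfold NZ, betaZ. cbn [fst snd]. zR.
  rewrite <- H1, <- HK. ring.
Qed.

Definition FZ m k (al be : Z * Z) : Z * Z := mulZ m k al (conjZ m be).

Lemma xy_F q m k (HP : PAR q m k) a b c d : isSL2 a b c d ->
  (xg q a b c d, yg q a b c d) =
  (snd (emb q (FZ m k (alphaZ m k a b c d) (betaZ m k a b c d))),
   fst (emb q (FZ m k (alphaZ m k a b c d) (betaZ m k a b c d)))).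
Proof.
  intros H. pose proof (HK_of q m k HP) as HK. destruct HP as [H1 [H2 [H3 _]]].
  assert (HD : IZR a * IZR d - IZR b * IZR c = 1).
  { unfold isSL2 in H. rewrite <- mult_IZR, <- mult_IZR, <- minus_IZR, H. reflexivity. }
  pose proof (part1_gen (mu q) (lam q) (IZR a) (IZR b) (IZR c) (IZR d) HD) as P.
  cbv zeta in P. destruct P as [_ [P2 P3]].
  pose proof (Rgam_formula q a b c d H H3) as RG.
  unfold emb, FZ, mulZ, conjZ, alphaZ, betaZ. cbn [fst snd]. zR. rewrite <- H1, <- HK.
  apply injective_projections; cbn [fst snd].
  - unfold xg. rewrite P3. ring.
  - unfold yg. rewrite RG. rewrite P2. ring.
Qed.

Lemma has_card_map {A B} (S : B -> Prop) (f : A -> B) (l : list A) :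
  NoDup l -> (forall x y, f x = f y -> x = y) -> (forall w, S w <-> exists p, w = f p /\ In p l) ->
  has_card S (length l).
Proof.
  intros Hn Hi H. exists (map f l). split; [|split].
  - apply FinFun.Injective_map_NoDup; auto.
  - apply length_map.
  - intros w. rewrite H, in_map_iff. split; intros [p [H1 H2]]; exists p; auto.
Qed.

Lemma NZ_mul m k a b : NZ m k (mulZ m k a b) = (NZ m k a * NZ m k b)%Z.
Proof. unfold NZ, mulZ. cbn [fst snd]. ring. Qed.

Lemma mulZ_conj m k p : mulZ m k p (conjZ m p) = (NZ m k p, 0%Z).
Proof. unfold NZ, mulZ, conjZ. cbn [fst snd]. f_equal; ring. Qed.

Lemma sgm_NZ m k p : NZ m k (sgm m k p) = NZ m k p.
Proof.
  unfold sgm. destruct (Z.eqb m 0 && Z.eqb k 1)%bool eqn:E.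
  - apply andb_true_iff in E. destruct E as [E1 E2]. apply Z.eqb_eq in E1, E2. subst.
    unfold NZ. cbn [fst snd]. ring.
  - unfold NZ. cbn [fst snd]. ring.
Qed.

Definition sgmi m k (p : Z * Z) : Z * Z :=
  if (Z.eqb m 0 && Z.eqb k 1)%bool then (snd p, - fst p)%Z else (- fst p, - snd p)%Z.

Lemma sgm_sgmi m k p : sgm m k (sgmi m k p) = p.
Proof. destruct p. unfold sgm, sgmi. destruct (Z.eqb m 0 && Z.eqb k 1)%bool; cbn [fst snd]; f_equal; ring. Qed.

Lemma sgmi_sgm m k p : sgmi m k (sgm m k p) = p.
Proof. destruct p. unfold sgm, sgmi. destruct (Z.eqb m 0 && Z.eqb k 1)%bool; cbn [fst snd]; f_equal; ring. Qed.

Lemma sgmi_NZ m k p : NZ m k (sgmi m k p) = NZ m k p.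
Proof. rewrite <- (sgm_NZ m k (sgmi m k p)), sgm_sgmi. reflexivity. Qed.

Lemma even_q q : qset q -> (Nat.even q = true <-> mZ q = 0%Z).
Proof.
  intros Hq. unfold qset in Hq; simpl in Hq.
  destruct Hq as [<-|[<-|[<-|[<-|[<-|[<-|[<-|[<-|[<-|[]]]]]]]]]];
  vm_compute; split; intro H; try discriminate; auto.
Qed.

Section Main.
Variables (q : nat) (Hq : qset q).
Let m := mZ q.
Let k := kZ q.
Let HP : PAR q m k := par_ok q Hq.

Lemma qpos : (3 <= 4 * k - m * m)%Z.
Proof. destruct HP as [_ [_ [_ [_ [H _]]]]]. exact H. Qed.

Lemma mcase : (m = 0 \/ m = 1)%Z.
Proof. destruct HP as [_ [_ [_ [H _]]]]. exact H. Qed.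

Lemma emb_one : emb q (1%Z, 0%Z) = RtoC 1.
Proof. unfold emb, RtoC. cbn [fst snd]. apply injective_projections; cbn [fst snd]; ring. Qed.

Lemma emb_zero : emb q (0%Z, 0%Z) = RtoC 0.
Proof. unfold emb, RtoC. cbn [fst snd]. apply injective_projections; cbn [fst snd]; ring. Qed.

Lemma emb_sub p p' : emb q (fst p - fst p', snd p - snd p')%Z = (emb q p - emb q p')%C.
Proof. unfold emb, Cminus, Cplus, Copp. cbn [fst snd]. zR. apply injective_projections; cbn [fst snd]; ring. Qed.

Lemma emb_scal (s : Z) p : emb q (s * fst p, s * snd p)%Z = (RtoC (IZR s) * emb q p)%C.
Proof. unfold emb, RtoC, Cmult. cbn [fst snd]. zR. apply injective_projections; cbn [fst snd]; ring. Qed.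

Lemma units_iff w : units q w <-> exists p, w = emb q p /\ NZ m k p = 1%Z.
Proof.
  unfold units. rewrite OK_iff. split.
  - intros [[p ->] [w' [Hw' E]]]. exists p. split; auto.
    rewrite OK_iff in Hw'. destruct Hw' as [p' ->].
    rewrite <- (emb_mul q m k HP), <- emb_one in E. apply (emb_inj q m k HP) in E.
    apply (f_equal (NZ m k)) in E. rewrite NZ_mul in E. unfold NZ at 3 in E. cbn [fst snd] in E.
    pose proof (NZ_nonneg m k p ltac:(pose proof qpos; lia)).
    pose proof (NZ_nonneg m k p' ltac:(pose proof qpos; lia)).
    replace (1 * 1 + m * 1 * 0 + k * 0 * 0)%Z with 1%Z in E by ring.
    apply Z.eq_mul_1_nonneg in E; [tauto|lia].
  - intros [p [-> Hp]]. split; [exists p; auto|].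
    exists (emb q (conjZ m p)). split; [rewrite OK_iff; eauto|].
    rewrite <- (emb_mul q m k HP), mulZ_conj, Hp. apply emb_one.
Qed.

Lemma normset_iff M w : normset q (IZR M) w <-> exists p, w = emb q p /\ NZ m k p = M.
Proof.
  unfold normset. rewrite OK_iff. split.
  - intros [[p ->] Hn]. exists p. split; auto. rewrite (Nrm_emb q m k HP) in Hn. apply eq_IZR; auto.
  - intros [p [-> Hp]]. split; [eauto|]. rewrite (Nrm_emb q m k HP), Hp. reflexivity.
Qed.

Lemma card_normset M : has_card (normset q (IZR M)) (length (SL m k M)).
Proof.
  destruct (SL_spec m k M mcase qpos) as [Hn Hin].
  apply has_card_map with (f := emb q); auto.
  - apply (emb_inj q m k HP).
  - intros w. rewrite normset_iff. split; intros [p [H1 H2]]; exists p; split; auto; apply Hin; auto.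
Qed.

Lemma card_units : has_card (units q) (length (SL m k 1)).
Proof.
  destruct (SL_spec m k 1 mcase qpos) as [Hn Hin].
  apply has_card_map with (f := emb q); auto.
  - apply (emb_inj q m k HP).
  - intros w. rewrite units_iff. split; intros [p [H1 H2]]; exists p; split; auto; apply Hin; auto.
Qed.


Definition Gf (w : Z * Z) : R * R := (snd (emb q w), fst (emb q w)).

Definition VL (M2 : Z) : list ((Z * Z) * (Z * Z)) :=
  filter (fun v => CongB m k (fst v) (snd v))
    (list_prod (SL m k (M2 + (4 * k - m * m))) (SL m k M2)).

Lemma VL_In M2 v : In v (VL M2) <->
  CongB m k (fst v) (snd v) = true /\ NZ m k (fst v) = (M2 + (4 * k - m * m))%Z /\ NZ m k (snd v) = M2.
Proof.
  destruct v as [al be]. unfold VL. rewrite filter_In, in_prod_iff.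
  destruct (SL_spec m k (M2 + (4 * k - m * m)) mcase qpos) as [_ H1].
  destruct (SL_spec m k M2 mcase qpos) as [_ H2].
  rewrite H1, H2. cbn [fst snd]. tauto.
Qed.

Lemma Lset_iff M2 n (Hn : n = IZR M2 + 2 * lam q ^ 2) p :
  Lset q n p <-> exists v, In v (VL M2) /\ p = Gf (FZ m k (fst v) (snd v)).
Proof.
  pose proof qpos as Hq3. split.
  - intros [a [b [c [d [Hs [Hr ->]]]]]].
    exists (alphaZ m k a b c d, betaZ m k a b c d). rewrite VL_In. cbn [fst snd].
    assert (HB : NZ m k (betaZ m k a b c d) = M2).
    { rewrite (Rgam_NZ q m k HP a b c d Hs), Hn in Hr. apply eq_IZR. lra. }
    split; [split; [|split]|].
    + apply Valid_iff; [lia|]. exists a, b, c, d. auto.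
    + pose proof (det_id m k a b c d). unfold isSL2 in Hs. rewrite Hs in H. lia.
    + auto.
    + unfold Gf. apply (xy_F q m k HP a b c d Hs).
  - intros [[al be] [Hv ->]]. rewrite VL_In in Hv. cbn [fst snd] in *.
    destruct Hv as [Hc [H1 H2]]. apply Valid_iff in Hc; [|lia].
    destruct Hc as [a [b [c [d [<- <-]]]]].
    assert (Hs : isSL2 a b c d).
    { pose proof (det_id m k a b c d). rewrite H1, H2 in H. unfold isSL2.
      assert (E : ((4 * k - m * m) * (a * d - b * c) = (4 * k - m * m) * 1)%Z) by lia.
      apply Z.mul_reg_l in E; lia. }
    exists a, b, c, d. split; [auto|split].
    + rewrite (Rgam_NZ q m k HP a b c d Hs), H2. auto.
    + symmetry. apply (xy_F q m k HP a b c d Hs).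
Qed.

Lemma Gf_inj w w' : Gf w = Gf w' -> w = w'.
Proof.
  unfold Gf. intros H. injection H as H1 H2. apply (emb_inj q m k HP).
  apply injective_projections; auto.
Qed.


Lemma alpha_dec a b c d : emb q (alphaZ m k a b c d) =
  (emb q (b, a) - emb q (m, (-1)%Z) * emb q (d, c))%C.
Proof.
  rewrite <- (emb_mul q m k HP), <- emb_sub. f_equal. unfold alphaZ, mulZ. cbn [fst snd]. f_equal; ring.
Qed.

Lemma beta_dec a b c d : emb q (betaZ m k a b c d) =
  (emb q (b, a) - emb q (0%Z, 1%Z) * emb q (d, c))%C.
Proof.
  rewrite <- (emb_mul q m k HP), <- emb_sub. f_equal. unfold betaZ, mulZ. cbn [fst snd]. f_equal; ring.
Qed.

Lemma emb_neq0 p : p <> (0%Z, 0%Z) -> emb q p <> RtoC 0.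
Proof. intros H E. apply H. apply (emb_inj q m k HP). rewrite E, emb_zero. reflexivity. Qed.

Lemma fiber_Z al be al' be' :
  Valid m k al be -> Valid m k al' be' -> NZ m k al = NZ m k al' -> NZ m k be = NZ m k be' ->
  (NZ m k al - NZ m k be = 4 * k - m * m)%Z ->
  FZ m k al be = FZ m k al' be' ->
  exists e, NZ m k e = 1%Z /\ al' = mulZ m k e al /\ be' = mulZ m k e be.
Proof.
  pose proof qpos as Hq3.
  intros [a [b [c [d [<- <-]]]]] [a' [b' [c' [d' [<- <-]]]]] Ha Hb Hd HF.
  assert (Hdet : (a * d - b * c = 1)%Z).
  { pose proof (det_id m k a b c d).
    assert (E : ((4 * k - m * m) * (a * d - b * c) = (4 * k - m * m) * 1)%Z) by lia.
    apply Z.mul_reg_l in E; lia. }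
  assert (Hdet' : (a' * d' - b' * c' = 1)%Z).
  { pose proof (det_id m k a' b' c' d').
    assert (E : ((4 * k - m * m) * (a' * d' - b' * c') = (4 * k - m * m) * 1)%Z) by lia.
    apply Z.mul_reg_l in E; lia. }
  set (al := alphaZ m k a b c d) in *. set (be := betaZ m k a b c d) in *.
  set (al' := alphaZ m k a' b' c' d') in *. set (be' := betaZ m k a' b' c' d') in *.
  assert (Hnz : NZ m k al <> 0%Z) by (pose proof (NZ_nonneg m k be ltac:(lia)); lia).
  assert (Hne : emb q al <> RtoC 0).
  { apply emb_neq0. intro E. apply Hnz. rewrite E. unfold NZ; cbn [fst snd]; ring. }
  assert (Hz : (emb q (0%Z, 1%Z) - emb q (m, (-1)%Z))%C <> RtoC 0).
  { rewrite <- emb_sub. apply emb_neq0. cbn [fst snd]. intro E. injection E. lia. }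
  assert (Hab : (emb q al * Cconj (emb q be) = emb q al' * Cconj (emb q be'))%C).
  { rewrite <- !(emb_conj q m k HP), <- !(emb_mul q m k HP). f_equal. exact HF. }
  assert (Haa : (emb q al * Cconj (emb q al) = emb q al' * Cconj (emb q al'))%C).
  { rewrite <- !(emb_conj q m k HP), <- !(emb_mul q m k HP), !mulZ_conj, Ha. reflexivity. }
  assert (Hdc : (RtoC (IZR a) * emb q (d, c) - RtoC (IZR c) * emb q (b, a))%C = RtoC 1).
  { rewrite <- !emb_scal, <- emb_sub, <- emb_one. cbn [fst snd]. f_equal. f_equal; lia. }
  destruct (fib_C (emb q al) (emb q be) (emb q al') (emb q be') (emb q (b, a)) (emb q (d, c))
     (emb q (b', a')) (emb q (d', c')) (emb q (0%Z, 1%Z)) (emb q (m, (-1)%Z)) (RtoC (IZR a)) (RtoC (IZR c))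
     Hne Hz Hab Haa (alpha_dec a b c d) (beta_dec a b c d) (alpha_dec a' b' c' d') (beta_dec a' b' c' d') Hdc)
    as [HE [H1 H2]].
  set (e := (a * d' - c * b', a * c' - c * a')%Z).
  assert (Ee : (emb q al' / emb q al)%C = emb q e).
  { rewrite HE. rewrite <- !emb_scal, <- emb_sub. reflexivity. }
  rewrite Ee in H1, H2. rewrite <- (emb_mul q m k HP) in H1, H2.
  apply (emb_inj q m k HP) in H1. apply (emb_inj q m k HP) in H2.
  exists e. split; [|split; auto].
  apply (f_equal (NZ m k)) in H1. rewrite NZ_mul in H1.
  assert (E : (NZ m k e * NZ m k al = 1 * NZ m k al)%Z) by lia.
  apply Z.mul_reg_r in E; auto.
Qed.

Lemma fiber_conv al be e : Valid m k al be -> NZ m k e = 1%Z ->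
  Valid m k (mulZ m k e al) (mulZ m k e be) /\ FZ m k (mulZ m k e al) (mulZ m k e be) = FZ m k al be.
Proof.
  intros [a [b [c [d [<- <-]]]]] He. split.
  - set (P' := mulZ m k e (b, a)). set (Q' := mulZ m k e (d, c)).
    exists (snd P'), (fst P'), (snd Q'), (fst Q').
    unfold P', Q', alphaZ, betaZ, mulZ. destruct e as [e1 e2]. cbn [fst snd].
    split; f_equal; ring.
  - unfold FZ. destruct e as [e1 e2]. unfold NZ in He. cbn [fst snd] in He.
    unfold mulZ, conjZ, alphaZ, betaZ. cbn [fst snd].
    f_equal.
    + match goal with |- ?L = ?R => transitivity ((e1 * e1 + m * e1 * e2 + k * e2 * e2) * R)%Z; [ring|] end.
      rewrite He. ring.
    + match goal with |- ?L = ?R => transitivity ((e1 * e1 + m * e1 * e2 + k * e2 * e2) * R)%Z; [ring|] end.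
      rewrite He. ring.
Qed.


Definition pdec : forall x y : Z * Z, {x = y} + {x <> y}.
Proof. decide equality; apply Z.eq_dec. Defined.

Definition FZv (v : (Z * Z) * (Z * Z)) : Z * Z := FZ m k (fst v) (snd v).

Lemma VL_nodup M2 : NoDup (VL M2).
Proof.
  unfold VL. apply NoDup_filter, NoDup_list_prod; apply (SL_spec m k _ mcase qpos).
Qed.

Lemma fiber_size M2 v : In v (VL M2) -> cnt pdec FZv (FZv v) (VL M2) = length (SL m k 1).
Proof.
  pose proof qpos as Hq3.
  intros Hv. destruct v as [al be]. pose proof Hv as Hv'. rewrite VL_In in Hv'. cbn [fst snd] in Hv'.
  destruct Hv' as [Hc [H1 H2]].
  unfold cnt. rewrite <- (length_map (fun e => (mulZ m k e al, mulZ m k e be)) (SL m k 1)).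
  apply has_len_eq.
  - apply NoDup_filter, VL_nodup.
  - apply FinFun.Injective_map_NoDup; [|apply (SL_spec m k 1 mcase qpos)].
    intros e e' Eq0. assert (E : mulZ m k e al = mulZ m k e' al) by exact (f_equal fst Eq0).
    assert (Hne : emb q al <> RtoC 0).
    { apply emb_neq0. intro E0. rewrite E0 in H1. unfold NZ in H1. cbn [fst snd] in H1.
      pose proof (NZ_nonneg m k be ltac:(lia)). lia. }
    apply (f_equal (emb q)) in E. rewrite !(emb_mul q m k HP) in E.
    rewrite (Cmult_comm (emb q e)), (Cmult_comm (emb q e')) in E.
    apply Cmult_eq_reg_l in E; auto. apply (emb_inj q m k HP); auto.
  - intros [al' be']. rewrite filter_In, in_map_iff. split.
    + intros [Hin Hf]. destruct (pdec (FZv (al', be')) (FZv (al, be))) as [Hf'|]; [|discriminate].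
      rewrite VL_In in Hin. cbn [fst snd] in Hin. destruct Hin as [Hc' [H1' H2']].
      unfold FZv in Hf'. cbn [fst snd] in Hf'.
      destruct (fiber_Z al be al' be') as [e [He [E1 E2]]].
      * apply Valid_iff; auto; lia.
      * apply Valid_iff; auto; lia.
      * lia.
      * lia.
      * lia.
      * auto.
      * exists e. split; [subst; auto|]. apply (SL_spec m k 1 mcase qpos). auto.
    + intros [e [E He]]. injection E as <- <-. apply (SL_spec m k 1 mcase qpos) in He.
      destruct (fiber_conv al be e) as [Hv1 Hf1]; [apply Valid_iff; auto; lia| auto|].
      split.
      * rewrite VL_In. cbn [fst snd]. split; [apply Valid_iff; auto; lia|].
        rewrite !NZ_mul, He, H1, H2. split; ring.
      * unfold FZv. cbn [fst snd]. rewrite Hf1. destruct (pdec _ _); auto.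
Qed.

Lemma filter_all {A} (f : A -> bool) l : (forall x, In x l -> f x = true) -> filter f l = l.
Proof. induction l; simpl; intros H; auto. rewrite H by auto. f_equal. apply IHl. intros; apply H; auto. Qed.

Lemma sgm_perm M : Permutation (map (sgm m k) (SL m k M)) (SL m k M).
Proof.
  destruct (SL_spec m k M mcase qpos) as [Hn Hin].
  apply NoDup_Permutation; auto.
  - apply FinFun.Injective_map_NoDup; auto. intros x y E.
    rewrite <- (sgmi_sgm m k x), <- (sgmi_sgm m k y), E. reflexivity.
  - intros x. rewrite in_map_iff. split.
    + intros [y [<- Hy]]. apply Hin. rewrite sgm_NZ. apply Hin; auto.
    + intros Hx. exists (sgmi m k x). split; [apply sgm_sgmi|]. apply Hin. rewrite sgmi_NZ. apply Hin; auto.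
Qed.

Lemma VL_count M2 :
  (CondZ m k (M2 + (4 * k - m * m)) = true ->
     1 * length (VL M2) = length (SL m k M2) * length (SL m k (M2 + (4 * k - m * m))))%nat /\
  (CondZ m k (M2 + (4 * k - m * m)) = false ->
     2 * length (VL M2) = length (SL m k M2) * length (SL m k (M2 + (4 * k - m * m))))%nat.
Proof.
  destruct (SL_spec m k M2 mcase qpos) as [Hn2 Hin2].
  destruct (SL_spec m k (M2 + (4 * k - m * m)) mcase qpos) as [Hn1 Hin1].
  split; intros Hcond; unfold VL; apply (prod_count (CongB m k)); intros a Ha; apply Hin1 in Ha.
  - rewrite filter_all; [lia|]. intros b Hb. apply Hin2 in Hb.
    apply (core q Hq). fold m k. lia. fold m k. rewrite Ha. auto.
  - pose proof (filter_length (CongB m k a) (SL m k M2)) as FL.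
    assert (E : length (filter (CongB m k a) (SL m k M2)) =
                length (filter (fun x => negb (CongB m k a x)) (SL m k M2))).
    { rewrite (filter_length_perm (CongB m k a) _ _ (Permutation_sym (sgm_perm M2))).
      rewrite filter_map_len. f_equal. apply filter_ext_in. intros b Hb. apply Hin2 in Hb.
      apply (core q Hq). fold m k. lia. fold m k. rewrite Ha. auto. }
    lia.
Qed.


Lemma cn_val M1 n : n + 2 * lam q ^ 2 = IZR M1 -> cn q n = if CondZ m k M1 then 1/2 else 1/4.
Proof.
  intros Hn. pose proof qpos as Hq3. destruct HP as [_ [H2 [_ [_ [_ Hqz]]]]].
  assert (HqR : INR q = IZR (4 * k - m * m)) by (rewrite INR_IZR_INZ, Hqz; reflexivity).
  assert (Hn' : n = IZR M1 - IZR (4 * k - m * m) / 2).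
  { replace (lam q ^ 2) with (lam q * lam q) in Hn by ring. lra. }
  assert (Hiff : cn_cond q n <-> CondZ m k M1 = true).
  { unfold cn_cond. pose proof (even_q q Hq) as Hev. fold m in Hev.
    destruct mcase as [m0|m1].
    - assert (Hevt : Nat.even q = true) by (apply Hev; auto).
      unfold CondZ. rewrite m0. cbn [Z.eqb]. rewrite Z.even_spec. rewrite m0 in Hn'.
      split.
      + intros [[_ [k' Hk']] | [He _]]; [|congruence].
        exists (k' + k)%Z. apply eq_IZR. zR. lra.
      + intros [j Hj]. left. split; auto. exists (j - k)%Z. rewrite Hn', Hj. zR. lra.
    - assert (Hevf : Nat.even q = false).
      { destruct (Nat.even q) eqn:E; auto. exfalso. assert (m = 0%Z) by (apply Hev; reflexivity). lia. }
      unfold CondZ. rewrite m1. cbn [Z.eqb]. rewrite m1 in Hn', HqR.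
      replace (4 * k - 1 * 1)%Z with (4 * k - 1)%Z in Hn', HqR by ring.
      rewrite modeq0 by lia. split.
      + intros [[He _] | [_ [k' Hk']]]; [congruence|].
        rewrite HqR, Hn' in Hk'.
        assert (E : (2 * M1 = (4 * k - 1) * (k' + 1))%Z).
        { apply eq_IZR. rewrite mult_IZR, mult_IZR, plus_IZR. rewrite minus_IZR, mult_IZR in Hk'.
          rewrite minus_IZR, mult_IZR. lra. }
        apply (Gauss _ 2). { exists (k' + 1)%Z. rewrite E. ring. }
        apply bezout_rel_prime. apply (Bezout_intro _ _ _ (-1) (2 * k)). ring.
      + intros [j Hj]. right. split; auto. exists (2 * j - 1)%Z. rewrite HqR, Hn', Hj. zR. field. }
  unfold cn. destruct (excluded_middle_informative (cn_cond q n)) as [C|C];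
    destruct (CondZ m k M1) eqn:E; auto; exfalso.
  - apply Hiff in C. congruence.
  - apply C, Hiff; auto.
Qed.

End Main.


Theorem lemma2p4 (q : nat) (Hq : qset q) :
  (forall a b c d : Z, isSL2 a b c d ->
     let n := Rgam q a b c d in
     let z := zq q in
     let r := IZR (a + d) in
     let u := IZR b - Cmod z ^ 2 * IZR c - 2 * mu q * IZR d in
     let s := IZR a - IZR d - 2 * mu q * IZR c in
     let t := IZR b + Cmod z ^ 2 * IZR c in
     (exists ui si ti : Z, u = IZR ui /\ s = IZR si /\ t = IZR ti) /\
     Nrm (RtoC u + RtoC r * z)%C = n + 2 * lam q ^ 2 /\
     Nrm (RtoC t + RtoC s * z)%C = n - 2 * lam q ^ 2 /\
     ((yg q a b c d, xg q a b c d) : C)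
       = ((RtoC u + RtoC r * z) * (RtoC t + RtoC s * Cconj z))%C) /\
  (forall n : R, Nset q n ->
     exists L U R1 R2 : nat,
       has_card (Lset q n) L /\ has_card (units q) U /\
       has_card (normset q (n + 2 * lam q ^ 2)) R1 /\
       has_card (normset q (n - 2 * lam q ^ 2)) R2 /\
       INR L = 2 * cn q n / INR U * INR R1 * INR R2).
Proof.
  split; [apply part1; auto|].
  intros n [a0 [b0 [c0 [d0 [Hs Hn]]]]].
  pose proof (par_ok q Hq) as HP.
  set (m := mZ q) in *. set (k := kZ q) in *.
  set (M2 := NZ m k (betaZ m k a0 b0 c0 d0)).
  assert (Hn2 : n = IZR M2 + 2 * lam q ^ 2) by (rewrite <- Hn; apply (Rgam_NZ q m k HP); auto).
  set (M1 := (M2 + (4 * k - m * m))%Z).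
  assert (HM1 : n + 2 * lam q ^ 2 = IZR M1).
  { destruct HP as [_ [H2 _]]. unfold M1. rewrite plus_IZR, <- H2, Hn2. ring. }
  assert (HM2 : n - 2 * lam q ^ 2 = IZR M2) by lra.
  set (ImL := nodup pdec (map (FZv q) (VL q M2))).
  exists (length ImL), (length (SL m k 1)), (length (SL m k M1)), (length (SL m k M2)).
  split; [|split; [|split; [|split]]].
  - apply has_card_map with (f := Gf q).
    + apply NoDup_nodup.
    + apply Gf_inj; auto.
    + intros w. rewrite (Lset_iff q Hq M2 n Hn2). unfold ImL. split.
      * intros [v [Hv ->]]. exists (FZv q v). split; auto. apply nodup_In, in_map; auto.
      * intros [p [-> Hp]]. apply nodup_In, in_map_iff in Hp. destruct Hp as [v [<- Hv]].
        exists v. split; auto.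
  - apply card_units; auto.
  - rewrite HM1. apply card_normset; auto.
  - rewrite HM2. apply card_normset; auto.
  - assert (Hfib : length (VL q M2) = (length (SL m k 1) * length ImL)%nat).
    { apply fiber_count. intros v Hv. apply fiber_size; auto. }
    assert (HU : (0 < length (SL m k 1))%nat).
    { destruct (SL_spec m k 1 (mcase q Hq) (qpos q Hq)) as [_ Hin].
      destruct (SL m k 1) eqn:E; simpl; [|lia]. exfalso. apply (proj2 (Hin (1%Z, 0%Z))).
      unfold NZ. cbn [fst snd]. ring. }
    rewrite (cn_val q Hq M1 n HM1).
    destruct (VL_count q Hq M2) as [C1 C2]. fold m k M1 in C1, C2.
    assert (HUR : 0 < INR (length (SL m k 1))) by (apply lt_0_INR; auto).
    destruct (CondZ (mZ q) (kZ q) M1) eqn:EC.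
    + specialize (C1 EC). rewrite Hfib in C1.
      apply (f_equal INR) in C1. rewrite !mult_INR in C1. simpl (INR 1) in C1.
      field_simplify_eq; [|lra]. nra.
    + specialize (C2 EC). rewrite Hfib in C2.
      apply (f_equal INR) in C2. rewrite !mult_INR in C2. simpl (INR 2) in C2.
      field_simplify_eq; [|lra]. nra.
Qed.
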